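(* Let $r>2$ and fix $i_-$ with $1\le i_-\le r-1$; put $i_+=i_-+1$. Denote the generators of $H^e_{r+1}$ by $\check T_i$ ($i\in\mathbb Z/(r+1)\mathbb Z$) and $\check T_\rho^{\pm1}$. Then the assignment \[ T_i\mapsto\begin{cases}\check T_i & 1\le i<i_-,\\ \check T_{i_-}\check T_{i_+}\check T_{i_-}^{-1} & i=i_-,\\ \check T_{i+1} & i_+\le i\le r,\end{cases}\qquad T_\rho\mapsto \check T_{i_+}^{-1}\check T_\rho,\quad T_\rho^{-1}\mapsto \check T_\rho^{-1}\check T_{i_+} \] (where the generators $T_i$ of $H^e_r$ are indexed by $i\in\{1,\dots,r\}$ representing $\mathbb Z/r\mathbb Z$) extends to an injective $\mathcal A$-algebra homomorphism $\phi^e_v:H^e_r\to H^e_{r+1}$.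
   Context: $\mathcal A=\mathbb Z[v,v^{-1}]$. For $r>2$, the extended affine Hecke algebra $H^e_r$ of type A (Iwahori–Matsumoto presentation) is the associative unital $\mathcal A$-algebra with generators $T_i$ ($i\in\mathbb Z/r\mathbb Z$) and $T_\rho,T_\rho^{-1}$, subject to: $(T_i-v)(T_i+v^{-1})=0$; $T_iT_{i+1}T_i=T_{i+1}T_iT_{i+1}$; $T_iT_j=T_jT_i$ whenever $i-j\not\equiv\pm1\pmod r$; $T_\rho T_i=T_{i+1}T_\rho$; $T_\rho T_\rho^{-1}=T_\rho^{-1}T_\rho=1$ (all indices taken mod $r$). *)

(* Defs.v *)
From HB Require Import structures.
From mathcomp Require Import all_boot all_algebra.
Set Implicit Arguments. Unset Strict Implicit. Unset Printing Implicit Defensive.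
Import GRing.Theory.
Local Open Scope ring_scope.

(* Generating data for the extended affine Hecke algebra H^e_r, r = n.+1.
   The coefficient ring A = Z[v,v^-1] is encoded by a central unit v with
   inverse vi (an A-algebra structure on a ring R is exactly such a pair).
   Generators T_i, i in Z/rZ, are indexed by 'I_r (paper index r <-> 0). *)
Record hdata (R : pzRingType) (n : nat) := HData {
  hv : R; hvi : R; hT : 'I_n.+1 -> R; hrho : R; hrhoi : R }.

Definition om (n k : nat) : 'I_n.+1 := Ordinal (ltn_pmod k (ltn0Sn n)).

Definition hecke_rel (R : pzRingType) (n : nat) (g : hdata R n) : Prop :=
  hv g * hvi g = 1 /\ hvi g * hv g = 1 /\
  (forall x : R, hv g * x = x * hv g) /\ (forall x : R, hvi g * x = x * hvi g) /\
  (forall i, (hT g i - hv g) * (hT g i + hvi g) = 0) /\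
  (forall i : 'I_n.+1,
     hT g i * hT g (om n i.+1) * hT g i = hT g (om n i.+1) * hT g i * hT g (om n i.+1)) /\
  (forall i j : 'I_n.+1, j != om n i.+1 -> i != om n j.+1 ->
     hT g i * hT g j = hT g j * hT g i) /\
  (forall i : 'I_n.+1, hrho g * hT g i = hT g (om n i.+1) * hrho g) /\
  hrho g * hrhoi g = 1 /\ hrhoi g * hrho g = 1.

Definition hecke_gen_map (R S : pzRingType) (n : nat) (g : hdata R n) (g' : hdata S n)
  (f : R -> S) : Prop :=
  f (hv g) = hv g' /\ f (hvi g) = hvi g' /\ (forall i, f (hT g i) = hT g' i) /\
  f (hrho g) = hrho g' /\ f (hrhoi g) = hrhoi g'.

(* (H, g) is the algebra presented by generators and relations, i.e. it has
   the universal property of the presentation among A-algebras. *)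
Definition is_hecke (H : pzRingType) (n : nat) (g : hdata H n) : Prop :=
  hecke_rel g /\
  forall (B : pzRingType) (g' : hdata B n), hecke_rel g' ->
    (exists f : {rmorphism H -> B}, hecke_gen_map g g' f) /\
    (forall f1 f2 : {rmorphism H -> B},
        hecke_gen_map g g' f1 -> hecke_gen_map g g' f2 -> f1 =1 f2).

(* Main.v *)
Require Import Defs.
From HB Require Import structures.
From mathcomp Require Import all_boot all_algebra.
From mathcomp Require Import zify.
Set Implicit Arguments. Unset Strict Implicit. Unset Printing Implicit Defensive.
Import GRing.Theory.
Local Open Scope ring_scope.


Lemma om_val n k : nat_of_ord (om n k) = (k %% n.+1)%N.
Proof. by []. Qed.

Lemma om_eq n (i j : 'I_n.+1) : (i = j) <-> (nat_of_ord i = nat_of_ord j).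
Proof. by split=> [->//|/val_inj]. Qed.

Lemma om_mod n k : om n (k %% n.+1) = om n k.
Proof. apply/val_inj; by rewrite /= modn_mod. Qed.

Lemma om_ord n (i : 'I_n.+1) : om n i = i.
Proof. apply/val_inj; by rewrite /= modn_small. Qed.

Lemma om_addml n (i : 'I_n.+1) k : om n ((om n i) + k) = om n (i + k).
Proof. apply/val_inj; by rewrite /= modnDml. Qed.

Section Base.
Variables (R : pzRingType) (n : nat) (g : hdata R n).
Local Notation T := (hT g).
Local Notation v := (hv g).
Local Notation vi := (hvi g).
Local Notation rho := (hrho g).
Local Notation rhoi := (hrhoi g).

Definition RelAt (i : 'I_n.+1) : Prop :=
  (T i - v) * (T i + vi) = 0 /\
  T i * T (om n i.+1) * T i = T (om n i.+1) * T i * T (om n i.+1) /\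
  (forall k, (2 <= k <= n.-1)%N -> T i * T (om n (i + k)) = T (om n (i + k)) * T i).

Hypotheses (vvi : v * vi = 1) (viv : vi * v = 1)
  (vc : forall x : R, v * x = x * v) (vic : forall x : R, vi * x = x * vi)
  (rT : forall i : 'I_n.+1, rho * T i = T (om n i.+1) * rho)
  (rri : rho * rhoi = 1) (rir : rhoi * rho = 1).

Let c x := rho * x * rhoi.
Let cM x y : c (x * y) = c x * c y.
Proof. by rewrite /c !mulrA -[rho * x * rhoi * rho]mulrA rir mulr1. Qed.
Let cT i : c (T i) = T (om n i.+1).
Proof. by rewrite /c rT -mulrA rri mulr1. Qed.
Let cv : c v = v.
Proof. by rewrite /c -vc -mulrA rri mulr1. Qed.
Let cvi : c vi = vi.
Proof. by rewrite /c -vic -mulrA rri mulr1. Qed.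
Let cD x y : c (x + y) = c x + c y.
Proof. by rewrite /c mulrDr mulrDl. Qed.
Let cN x : c (- x) = - c x.
Proof. by rewrite /c mulrN mulNr. Qed.
Let c0 : c 0 = 0.
Proof. by rewrite /c mulr0 mul0r. Qed.

Lemma RelAt_succ i : RelAt i -> RelAt (om n i.+1).
Proof.
move=> [q [b cm]]; split; last split.
- by rewrite -cT -cv -cvi -cN -!cD -cM q c0.
- by rewrite -(cT i) -(cT (om n i.+1)) -!cM b.
- move=> k hk.
  have E : om n (om n i.+1 + k) = om n (om n (i + k)).+1.
    apply/val_inj; rewrite /= modnDml -[((i + k) %% n.+1).+1]addn1 modnDml.
    by rewrite addn1 addSn.
  by rewrite E -(cT i) -(cT (om n (i+k))) -!cM cm.
Qed.

Lemma RelAt_iter b m : RelAt b -> RelAt (om n (b + m)).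
Proof.
move=> h; elim: m => [|m IH]; first by rewrite addn0 om_ord.
have := RelAt_succ IH.
have -> : om n (om n (b + m)).+1 = om n (b + m.+1); last by [].
apply/val_inj; rewrite /= -[((b + m) %% n.+1).+1]addn1 modnDml.
by rewrite addn1 addnS.
Qed.

Lemma hecke_rel_of_base b : RelAt b -> hecke_rel g.
Proof.
move=> hb.
have all : forall i, RelAt i.
  move=> i; have := RelAt_iter (i + (n.+1 - b)) hb.
  have -> : om n (b + (i + (n.+1 - b))) = i; last by [].
  apply/val_inj; rewrite /=.
  have hb' : (b < n.+1)%N := ltn_ord b.
  rewrite addnC -addnA [(n.+1 - b + b)%N]addnC subnKC ?(ltnW hb') //.
  by rewrite modnDr modn_small.
do 4 (split; first by []).
split; first by move=> i; case: (all i).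
split; first by move=> i; case: (all i) => _ [].
split; last by [].
move=> i j hj hi.
case: (eqVneq i j) => [->//|hij].
pose k := ((j + (n.+1 - i)) %% n.+1)%N.
have hj' : j = om n (i + k).
  apply/val_inj; rewrite /= /k modnDmr addnA [(i + j)%N]addnC -addnA subnKC ?(ltnW (ltn_ord i)) //.
  by rewrite modnDr modn_small.
have [_ [_ cm]] := all i.
rewrite hj' cm //.
have hi1 := ltn_ord i; have hj1 := ltn_ord j.
have hj2 : (j : nat) <> (i.+1 %% n.+1)%N.
  by move=> e; move/negP: hj; apply; apply/eqP/val_inj.
have hi2 : (i : nat) <> (j.+1 %% n.+1)%N.
  by move=> e; move/negP: hi; apply; apply/eqP/val_inj.
have hij2 : (i : nat) <> j.
  by move=> e; move/negP: hij; apply; apply/eqP/val_inj.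
have M1 : forall a, (a < 2 * n.+1)%N -> (a %% n.+1 = if (a < n.+1)%N then a else a - n.+1)%N.
  move=> a ha; case: ltnP => h; first by rewrite modn_small.
  rewrite -{1}(subnK h) modnDr modn_small //; lia.
move: hj2 hi2; rewrite /k !M1; try lia.
case: ifP; case: ifP; case: ifP; lia.
Qed.
End Base.



Section Mat.
Variables (H : pzRingType) (N : nat).

Definition vec (z : nat) (h : H) : 'cV[H]_N := \col_x (if (x : nat) == z then h else 0).

Lemma vecE z h x j : vec z h x j = if (x : nat) == z then h else 0.
Proof. by rewrite mxE. Qed.

Lemma mul_vec (A : 'M[H]_N) z h x j :
  (A *m vec z h) x j = \sum_(w < N) (A x w * (if (w : nat) == z then h else 0)).
Proof. by rewrite mxE; apply: eq_bigr => w _; rewrite vecE. Qed.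

Lemma vecD z a b : vec z a + vec z b = vec z (a + b).
Proof. apply/matrixP => x j; rewrite !mxE; case: eqP => _ //; by rewrite addr0. Qed.

Lemma vec0 z : vec z 0 = 0.
Proof. apply/matrixP => x j; rewrite !mxE; by case: eqP. Qed.

Lemma vec_big z h : (N <= z)%N -> vec z h = 0.
Proof. move=> hz; apply/matrixP => x j; rewrite !mxE; case: eqP => // e.
have := ltn_ord x; lia. Qed.

Lemma mul_vec_ord (A : 'M[H]_N) (z : 'I_N) h x j :
  (A *m vec z h) x j = A x z * h.
Proof.
rewrite mul_vec (bigD1 z) //= eqxx big1 ?addr0 //.
by move=> w /negbTE hw; rewrite -(inj_eq val_inj) in hw; rewrite /= hw mulr0.
Qed.

Lemma mx_eq_vec (A B : 'M[H]_N) :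
  (forall y h, (y < N)%N -> A *m vec y h = B *m vec y h) -> A = B.
Proof.
move=> e; apply/matrixP => x y.
have := congr1 (fun M : 'cV[H]_N => M x 0) (e y 1 (ltn_ord y)).
by rewrite !mul_vec_ord !mulr1.
Qed.

End Mat.

Lemma mul_vec_nat (H : pzRingType) N (A : 'M[H]_N.+1) z h x j : (z < N.+1)%N ->
  (A *m vec N.+1 z h) x j = A x (inord z) * h.
Proof.
move=> hz; rewrite -(mul_vec_ord A (inord z) h x j); congr (_ _ x j); congr (_ *m _).
by apply/matrixP => a b; rewrite !mxE inordK.
Qed.

Section Gen.
Variables (H : pzRingType) (n : nat) (g : hdata H n).
Local Notation N := n.+2.
Local Notation vec := (vec N).
Definition Th j := hT g (om n j).
Definition dd := hv g - hvi g.

Definition Rm : 'M[H]_N := \matrix_(x, y) if (y : nat) == n.+1 then (if (x : nat) == 0%N then 1 else 0)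
   else if (x : nat) == y.+1 then hrho g else 0.
Definition Rim : 'M[H]_N := \matrix_(x, y) if (y : nat) == 0%N then (if (x : nat) == n.+1 then 1 else 0)
   else if (x : nat).+1 == y then hrhoi g else 0.
Definition Tm (k : nat) : 'M[H]_N := \matrix_(x, y)
  if (y : nat) == k.-1 then (if (x : nat) == k then 1 else 0)
  else if (y : nat) == k then ((if (x : nat) == k.-1 then 1 else 0) + (if (x : nat) == k then dd else 0))
  else if (x : nat) == y then (if (y < k.-1)%N then Th k.-1 else Th k) else 0.
Definition T0m : 'M[H]_N := \matrix_(x, y)
  if (y : nat) == n.+1 then (if (x : nat) == 0%N then hrhoi g else 0)
  else if (y : nat) == 0%N then ((if (x : nat) == n.+1 then hrho g else 0) + (if (x : nat) == 0%N then dd else 0))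
  else if (x : nat) == y then Th 0 else 0.

Ltac vsolve := apply/matrixP => x j; rewrite mul_vec_nat; [|lia]; rewrite !mxE ?inordK; [|lia..];
  repeat (case: eqP => ? /=); repeat (case: ifP => ? /=); rewrite ?(mulr1, mul1r, mul0r, addr0, add0r, mulrDl) //; try lia.

Lemma Rm_last y h : y = n.+1 -> Rm *m vec y h = vec 0 h.
Proof. move=> ->; vsolve. Qed.
Lemma Rm_lt y h : (y < n.+1)%N -> Rm *m vec y h = vec y.+1 (hrho g * h).
Proof. move=> hy; vsolve. Qed.
Lemma Rim_0 y h : y = 0%N -> Rim *m vec y h = vec n.+1 h.
Proof. move=> ->; vsolve. Qed.
Lemma Rim_pos y h : (0 < y < n.+2)%N -> Rim *m vec y h = vec y.-1 (hrhoi g * h).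
Proof. move=> hy; vsolve. Qed.
Lemma Tm_a k y h : (0 < k < n.+2)%N -> y = k.-1 -> Tm k *m vec y h = vec k h.
Proof. move=> hk ->; vsolve. Qed.
Lemma Tm_b k y h : (0 < k < n.+2)%N -> y = k -> Tm k *m vec y h = vec k.-1 h + vec k (dd * h).
Proof. move=> hk ->; vsolve. Qed.
Lemma Tm_lt k y h : (y < k.-1)%N -> (k < n.+2)%N -> Tm k *m vec y h = vec y (Th k.-1 * h).
Proof. move=> hy hk; vsolve. Qed.
Lemma Tm_gt k y h : (k < y < n.+2)%N -> Tm k *m vec y h = vec y (Th k * h).
Proof. move=> hy; vsolve. Qed.
Lemma T0_last y h : y = n.+1 -> T0m *m vec y h = vec 0 (hrhoi g * h).
Proof. move=> ->; vsolve. Qed.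
Lemma T0_0 y h : y = 0%N -> T0m *m vec y h = vec n.+1 (hrho g * h) + vec 0 (dd * h).
Proof. move=> ->; vsolve. Qed.
Lemma T0_mid y h : (0 < y < n.+1)%N -> T0m *m vec y h = vec y (Th 0 * h).
Proof. move=> hy; vsolve. Qed.
End Gen.


Section Rels.
Variables (H : pzRingType) (n : nat) (g : hdata H n) (hg : hecke_rel g) (n2 : (2 <= n)%N).
Local Notation N := n.+2.
Local Notation vec := (vec N).
Local Notation Rm := (Rm g). Local Notation Rim := (Rim g).
Local Notation Tm := (Tm g). Local Notation T0m := (T0m g).
Local Notation Th := (Th g). Local Notation dd := (dd g).
Local Notation rho := (hrho g). Local Notation rhoi := (hrhoi g).

Lemma Th_rho j : rho * Th j = Th j.+1 * rho.
Proof.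
case: hg => _ [_ [_ [_ [_ [_ [_ [rT _]]]]]]].
rewrite /Th rT; congr (hT g _ * _); apply/val_inj => /=.
by rewrite -[(j %% n.+1).+1]addn1 modnDml addn1.
Qed.

Lemma dd_c x : dd * x = x * dd.
Proof.
case: hg => _ [_ [vc [vic _]]].
by rewrite /dd mulrBl mulrBr vc vic.
Qed.

Ltac stp := repeat match goal with
  | |- context [?A *m (?B + ?C)] => rewrite (mulmxDr A B C)
  | |- context [Rm *m vec ?y ?h] => first [rewrite (@Rm_last _ _ g y h); [|lia] | rewrite (@Rm_lt _ _ g y h); [|lia]]
  | |- context [Rim *m vec ?y ?h] => first [rewrite (@Rim_0 _ _ g y h); [|lia] | rewrite (@Rim_pos _ _ g y h); [|lia]]
  | |- context [T0m *m vec ?y ?h] => first [rewrite (@T0_last _ _ g y h); [|lia] | rewrite (@T0_0 _ _ g y h); [|lia] | rewrite (@T0_mid _ _ g y h); [|lia]]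
  | |- context [Tm ?k *m vec ?y ?h] => first [rewrite (@Tm_a _ _ g k y h); [|lia|lia] | rewrite (@Tm_b _ _ g k y h); [|lia|lia] | rewrite (@Tm_lt _ _ g k y h); [|lia|lia] | rewrite (@Tm_gt _ _ g k y h); [|lia]]
  end.

Ltac fin := apply/matrixP => x j; rewrite !mxE; repeat (case: eqP => ? /=); try lia;
   rewrite ?(addr0, add0r, mulr0, mul0r, mulr1, mul1r).

Lemma ThN1 : Th n.+1 = Th 0.
Proof. rewrite /Th; congr (hT g _); apply/val_inj => /=; by rewrite modnn mod0n. Qed.

Lemma rri : rho * rhoi = 1.
Proof. by case: hg => _ [_ [_ [_ [_ [_ [_ [_ [? _]]]]]]]]. Qed.
Lemma rir : rhoi * rho = 1.
Proof. by case: hg => _ [_ [_ [_ [_ [_ [_ [_ [_ ?]]]]]]]]. Qed.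

Ltac cl := rewrite ?mulrA ?Th_rho ?ThN1 ?rri ?rir ?mul1r ?prednK //; try (by rewrite dd_c); try lia.

Ltac spl y a := let h1 := fresh "c" in have [h1|h1|h1] := ltngtP y a.

Lemma rel_rho_mid (k : nat) : (0 < k <= n)%N -> Rm *m Tm k = Tm k.+1 *m Rm.
Proof.
move=> hk; apply: mx_eq_vec => y h hy; rewrite -!mulmxA.
spl y k.-1; spl y k; spl y n.+1; try lia.
all: stp; fin; cl.
Qed.

Lemma rel_rho_0 : Rm *m T0m = Tm 1 *m Rm.
Proof.
apply: mx_eq_vec => y h hy; rewrite -!mulmxA.
spl y 0%N; spl y n.+1; try lia.
all: stp; fin; cl.
Qed.

Lemma rel_rho_last : Rm *m Tm n.+1 = T0m *m Rm.
Proof.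
apply: mx_eq_vec => y h hy; rewrite -!mulmxA.
spl y n; spl y n.+1; try lia.
all: stp; fin; cl.
Qed.

Lemma rel_RRi : Rm *m Rim = 1%:M.
Proof.
apply: mx_eq_vec => y h hy; rewrite -!mulmxA mul1mx.
spl y 0%N; try lia.
all: stp; fin; cl.
Qed.

Lemma rel_RiR : Rim *m Rm = 1%:M.
Proof.
apply: mx_eq_vec => y h hy; rewrite -!mulmxA mul1mx.
spl y n.+1; try lia.
all: stp; fin; cl.
Qed.

Lemma scal_vec (a : H) y h : a%:M *m vec y h = vec y (a * h).
Proof.
apply/matrixP => x j; rewrite mxE (bigD1 x) //= big1 ?addr0.
  by rewrite !mxE eqxx mulr1n; case: eqP => _; rewrite ?mulr0.
by move=> w /negbTE hw; rewrite !mxE eq_sym hw mulr0n mul0r.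
Qed.

Lemma zlem (V : pzRingType) (a b c : V) (e : a - b + (c - 1) = 0) : a = (b - c) + 1.
Proof. apply/eqP; rewrite -subr_eq0 -(eqP (introT eqP e)) opprD opprB !addrA.
apply/eqP; congr (_ - _). by rewrite addrAC. Qed.

Lemma quadH (i : 'I_n.+1) : hT g i * hT g i = dd * hT g i + 1.
Proof.
case: hg => vvi [_ [vc [vic [q _]]]].
set T := hT g i; set v := hv g; set vi := hvi g.
have e : T * T - v * T + (vi * T - 1) = 0.
  by rewrite -vvi (vic T) -mulrBl -mulrBl -mulrDr; apply: q.
by rewrite /dd mulrBl; apply: zlem.
Qed.

Lemma quadTh j : Th j * Th j = dd * Th j + 1.
Proof. exact: quadH. Qed.

Lemma TT1 : Tm 1 *m Tm 1 = dd%:M *m Tm 1 + 1%:M.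
Proof.
apply: mx_eq_vec => y h hy; rewrite -!mulmxA mulmxDl mul1mx -mulmxA.
spl y 0%N; spl y 1%N; try lia.
all: stp; rewrite ?scal_vec; stp; rewrite ?scal_vec; fin; cl.
- by rewrite quadTh mulrDl mul1r.
- by rewrite addrC.
Qed.

Lemma om_S j : om n (om n j).+1 = om n j.+1.
Proof. apply/val_inj => /=; by rewrite -[(j %% n.+1).+1]addn1 modnDml addn1. Qed.

Lemma braidTh j : Th j * Th j.+1 * Th j = Th j.+1 * Th j * Th j.+1.
Proof.
case: hg => _ [_ [_ [_ [_ [b _]]]]].
by rewrite /Th -om_S b.
Qed.

Lemma commTh j k : (k %% n.+1 != (j.+1) %% n.+1)%N -> (j %% n.+1 != k.+1 %% n.+1)%N ->
  Th j * Th k = Th k * Th j.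
Proof.
case: hg => _ [_ [_ [_ [_ [_ [c _]]]]]] h1 h2.
rewrite /Th c //.
  apply: contra h1 => /eqP e; apply/eqP; move/(congr1 val): e => /=.
  by rewrite -[(j %% n.+1).+1]addn1 modnDml addn1.
apply: contra h2 => /eqP e; apply/eqP; move/(congr1 val): e => /=.
by rewrite -[(k %% n.+1).+1]addn1 modnDml addn1.
Qed.

Lemma braid12 : Tm 1 *m Tm 2 *m Tm 1 = Tm 2 *m Tm 1 *m Tm 2.
Proof.
apply: mx_eq_vec => y h hy; rewrite -!mulmxA.
spl y 0%N; spl y 1%N; spl y 2%N; try lia.
all: stp; fin; cl.
- by rewrite (braidTh 1).
- rewrite -(dd_c (Th 1)) -(mulrA dd) quadTh mulrDr mulr1 mulrDl addrC; congr (_ + _).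
  by rewrite -(mulrA dd (Th 1)) -dd_c !mulrA.
Qed.

Lemma modS a : (a <= n.+1)%N -> (a %% n.+1 = if a == n.+1 then 0 else a)%N.
Proof. move=> ha; case: eqP => [->|ne]; first by rewrite modnn. rewrite modn_small //; lia. Qed.

Lemma comm1k k : (3 <= k <= n.+1)%N -> Tm 1 *m Tm k = Tm k *m Tm 1.
Proof.
move=> hk; apply: mx_eq_vec => y h hy; rewrite -!mulmxA.
spl y 0%N; spl y 1%N; spl y k.-1; spl y k; try lia.
all: stp; fin; cl.
all: rewrite commTh //; rewrite ?modS; repeat case: ifP; lia.
Qed.

Definition Gen (k : 'I_N) : 'M[H]_N := if (k : nat) == 0%N then T0m else Tm k.
Definition gM : hdata 'M[H]_N n.+1 := @HData _ n.+1 (hv g)%:M (hvi g)%:M Gen Rm Rim.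

Lemma scal_c (a : H) (X : 'M[H]_N) : (forall y, a * y = y * a) -> a%:M * X = X * a%:M.
Proof.
move=> ac; rewrite -!mulmxE; apply: mx_eq_vec => y h hy.
rewrite -!mulmxA scal_vec mul_scalar_mx; apply/matrixP => x j.
rewrite mxE !mul_vec_nat //.
by rewrite mulrA ac -mulrA.
Qed.

Lemma quad_conv (S : pzRingType) (T v vi : S) : v * vi = 1 -> T * vi = vi * T ->
  T * T = (v - vi) * T + 1 -> (T - v) * (T + vi) = 0.
Proof.
move=> vvi tc e; rewrite mulrDr !mulrBl e tc vvi mulrBl.
by rewrite addrAC addrACA addrNK subrr addr0 subrr.
Qed.

Lemma gM_rel : hecke_rel gM.
Proof.
have [vvi [viv [vc [vic _]]]] := hg.
apply: (@hecke_rel_of_base _ _ gM _ _ _ _ _ _ _ (@Ordinal n.+2 1 isT)) => /=.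
- by rewrite -mulmxE -scalar_mxM vvi.
- by rewrite -mulmxE -scalar_mxM viv.
- by move=> X; apply: scal_c.
- by move=> X; apply: scal_c.
- move=> i; rewrite -!mulmxE /Gen /=.
  have hi := ltn_ord i.
  have [->|i0] := eqVneq (i : nat) 0%N.
    rewrite modn_small //; exact: rel_rho_0.
  have [e|ne] := eqVneq (i : nat) n.+1.
    by rewrite e modnn /= rel_rho_last.
  rewrite modn_small; last lia.
  rewrite /=; apply: rel_rho_mid; lia.
- by rewrite -mulmxE rel_RRi.
- by rewrite -mulmxE rel_RiR.
- rewrite /RelAt /= /Gen /=.
  have E2 : (2 %% n.+2 = 2)%N by rewrite modn_small //; lia.
  rewrite E2 /=; split; [|split].
  + apply: quad_conv; first by rewrite -mulmxE -scalar_mxM vvi.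
      by rewrite -(scal_c _ vic).
    by rewrite -!mulmxE TT1 /dd raddfB.
  + by rewrite -!mulmxE braid12.
  + move=> k hk; rewrite modn_small; last lia.
    rewrite /=; rewrite -!mulmxE; apply: comm1k; lia.
Qed.
End Rels.




Section F.
Variables (H' : pzRingType) (n : nat) (g' : hdata H' n.+1) (hg' : hecke_rel g') (n2 : (2 <= n)%N)
  (im : nat) (him : (1 <= im <= n)%N).
Local Notation U := (Th g').
Local Notation d := (dd g').
Local Notation rho := (hrho g'). Local Notation rhoi := (hrhoi g').
Definition Ui j := U j - d.

Lemma UUi j : U j * Ui j = 1.
Proof. by rewrite /Ui mulrBr (quadTh hg') -(dd_c hg') addrAC subrr add0r. Qed.
Lemma UiU j : Ui j * U j = 1.
Proof. by rewrite /Ui mulrBl (quadTh hg') addrAC subrr add0r. Qed.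

Lemma commU j k : (j < n.+2)%N -> (k < n.+2)%N -> j <> k.+1 -> k <> j.+1 ->
  ~ (j = 0%N /\ k = n.+1) -> ~ (k = 0%N /\ j = n.+1) -> U j * U k = U k * U j.
Proof.
move=> hj hk h1 h2 h3 h4; apply: (commTh hg').
  rewrite (@modn_small k) // (modS (n:=n.+1)) //; last lia.
  by case: ifP => [/eqP ?|_]; apply/eqP; lia.
rewrite (@modn_small j) // (modS (n:=n.+1)) //; last lia.
by case: ifP => [/eqP ?|_]; apply/eqP; lia.
Qed.

Lemma commUi a j : a * U j = U j * a -> a * Ui j = Ui j * a.
Proof. by move=> e; rewrite /Ui mulrBr mulrBl e dd_c. Qed.

Lemma rhoUi j : rho * Ui j = Ui j.+1 * rho.
Proof. by rewrite /Ui mulrBr mulrBl (Th_rho hg') (dd_c hg'). Qed.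

Lemma conjb a b : U a * U b * U a = U b * U a * U b -> U a * U b * Ui a = Ui b * U a * U b.
Proof.
move=> e.
rewrite -[LHS]mul1r -(UiU b) -!mulrA; congr (_ * _); rewrite !mulrA.
rewrite -e -[RHS]mulr1 -(UUi a) !mulrA.
by [].
Qed.

Definition Xim := U im * U im.+1 * Ui im.
Definition Aim (i : 'I_n.+1) : H' :=
  if (i : nat) == 0%N then U 0 else if (i < im)%N then U i else if (i : nat) == im then Xim else U i.+1.
Definition Pim := Ui im.+1 * rho.
Definition Qim := rhoi * U im.+1.
Definition gF : hdata H' n := @HData H' n (hv g') (hvi g') Aim Pim Qim.

Lemma braidU j : U j * U j.+1 * U j = U j.+1 * U j * U j.+1.
Proof. exact: (braidTh hg'). Qed.

Lemma XimE : Xim = Ui im.+1 * U im * U im.+1.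
Proof. exact: conjb (braidU im). Qed.

Lemma cancel_rho (x y : H') : x * rho = y * rho -> x = y.
Proof.
move=> e; rewrite -[x]mulr1 -[y]mulr1 -(rri hg') !mulrA e //.
Qed.

Lemma UN2 : U n.+2 = U 0.
Proof. exact: ThN1. Qed.

Lemma rhoU_push j x : rho * (U j * x) = U j.+1 * (rho * x).
Proof. by rewrite !mulrA (Th_rho hg'). Qed.

Lemma gF_rT (i : 'I_n.+1) : Pim * Aim i = Aim (om n i.+1) * Pim.
Proof.
have hi := ltn_ord i.
rewrite /Pim /Aim /=.
have [i0|i0] := eqVneq (i : nat) 0%N.
  rewrite i0 /= modn_small; last lia.
  have -> : (1 == 0)%N = false by [].
  case: ifP => h1.
    rewrite -!mulrA (Th_rho hg') !mulrA; congr (_ * _).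
    apply/esym; apply: commUi; apply: commU; lia.
  have e1 : im = 1%N by lia.
  rewrite e1 eqxx XimE e1 -!mulrA (Th_rho hg') !mulrA; congr (_ * _).
  by rewrite -!mulrA (UUi 2) mulr1.
have [ilt|ige] := ltnP i im.
  rewrite /= modn_small; last lia.
  have -> : (i.+1 == 0)%N = false by [].
  case: ifP => h1.
    rewrite -!mulrA (Th_rho hg') !mulrA; congr (_ * _).
    apply/esym; apply: commUi; apply: commU; lia.
  have e1 : i.+1 = im by lia.
  rewrite e1 eqxx XimE -!mulrA (Th_rho hg') e1 !mulrA; congr (_ * _).
  by rewrite -!mulrA (UUi im.+1) mulr1.
have [ie|ine] := eqVneq (i : nat) im.
  rewrite /Xim -!mulrA rhoU_push rhoU_push rhoUi !mulrA (UiU im.+1) mul1r; congr (_ * _).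
  have [imn|imn] := ltnP im n.
    rewrite ie modn_small; last lia.
    have -> : (im.+1 == 0)%N = false by [].
    rewrite ltnNge leqnSn /=.
    by have -> : (im.+1 == im)%N = false by lia.
  rewrite ie; have -> : im = n by lia.
  by rewrite modnn eqxx UN2.
have hlt : (im < i)%N by lia.
rewrite /=.
rewrite -!mulrA (Th_rho hg') !mulrA; congr (_ * _).
have [inn|inn] := ltnP i n.
  rewrite modn_small; last lia.
  have -> : (i.+1 == 0)%N = false by [].
  rewrite ltnNge (ltnW (leq_trans hlt (leqnSn _))) /=.
  have -> : (i.+1 == im)%N = false by lia.
  apply/esym; apply: commUi; apply: commU; lia.
have -> : (i : nat) = n by lia.
rewrite modnn eqxx UN2.
apply/esym; apply: commUi; apply: commU; lia.
Qed.

Lemma comm_mul (a x y : H') : a * x = x * a -> a * y = y * a -> a * (x * y) = (x * y) * a.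
Proof. by move=> e1 e2; rewrite mulrA e1 -mulrA e2 mulrA. Qed.

Lemma gF_rel : hecke_rel gF.
Proof.
have [vvi [viv [vc [vic [q _]]]]] := hg'.
apply: (@hecke_rel_of_base _ _ gF vvi viv vc vic gF_rT _ _ ord0) => /=.
- by rewrite /Pim /Qim -!mulrA (mulrA rho) (rri hg') mul1r UiU.
- by rewrite /Qim /Pim -!mulrA (mulrA (U im.+1)) UUi mul1r (rir hg').
- rewrite /RelAt /= /Aim /=; split; [|split].
  + exact: q.
  + rewrite modn_small; last lia.
    have -> : (1 == 0)%N = false by [].
    case: ifP => h1; first exact: (braidU 0).
    have e1 : im = 1%N by lia.
    rewrite e1 eqxx.
    have c02 : U 0 * U 2 = U 2 * U 0 by apply: commU; lia.
    have c0i2 : U 0 * Ui 2 = Ui 2 * U 0 by apply: commUi.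
    have b01 := braidU 0. have b12 := braidU 1.
    have XE := XimE; rewrite /Xim e1 in XE.
    rewrite /Xim e1.
    transitivity (Ui 2 * (U 0 * U 1 * U 0) * U 2).
      by rewrite XE !mulrA c0i2 -!mulrA c02.
    rewrite b01.
    transitivity (Ui 2 * U 1 * U 0 * (U 1 * U 2 * U 1) * Ui 1).
      by rewrite -!mulrA (UUi 1) mulr1.
    rewrite b12 {1}XE !mulrA.
    by rewrite -[Ui 2 * U 1 * U 2 * U 0]mulrA -c02 mulrA.
  + move=> k hk; rewrite add0n modn_small; last lia.
    have -> : (k == 0)%N = false by lia.
    case: ifP => h1; first by apply: commU; lia.
    case: ifP => h2.
      rewrite /Xim.
      have c1 : U 0 * U im = U im * U 0 by apply: commU; lia.
      have c2 : U 0 * U im.+1 = U im.+1 * U 0 by apply: commU; lia.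
      have c3 := commUi c1.
      by apply: comm_mul => //; apply: comm_mul.
    by apply: commU; lia.
Qed.
End F.


Section Blk.
Variables (R S : pzRingType) (m : nat) (a b : {rmorphism R -> 'M[S]_m}).
Definition blk (x : R) : 'M[S]_(m + m) := block_mx (a x) 0 0 (b x).
Fact blk_nmod : nmod_morphism blk.
Proof.
split; first by rewrite /blk !rmorph0 block_mx0.
by move=> x y; rewrite /blk !rmorphD add_block_mx addr0.
Qed.
Fact blk_mon : monoid_morphism blk.
Proof.
split; first by rewrite /blk !rmorph1 -!scalar_mx_block.
move=> x y; rewrite /blk -!mulmxE mulmx_block !rmorphM !mulmx0 !mul0mx !addr0 !add0r.
by rewrite !mulmxE.
Qed.
HB.instance Definition _ := GRing.isNmodMorphism.Build R 'M[S]_(m + m) blk blk_nmod.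
HB.instance Definition _ := GRing.isMonoidMorphism.Build R 'M[S]_(m + m) blk blk_mon.
End Blk.

Section Cnj.
Variables (R S : pzRingType) (phi : {rmorphism R -> S}) (u w : S) (uw : u * w = 1) (wu : w * u = 1).
Definition cnj (x : R) : S := let _ := (uw, wu) in u * phi x * w.
Fact cnj_nmod : nmod_morphism cnj.
Proof.
split; first by rewrite /cnj rmorph0 mulr0 mul0r.
by move=> x y; rewrite /cnj rmorphD mulrDr mulrDl.
Qed.
Fact cnj_mon : monoid_morphism cnj.
Proof.
split; first by rewrite /cnj rmorph1 mulr1.
move=> x y; rewrite /cnj rmorphM !mulrA; congr (_ * _).
by rewrite -(mulrA _ w u) wu mulr1.
Qed.
HB.instance Definition _ := GRing.isNmodMorphism.Build R S cnj cnj_nmod.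
HB.instance Definition _ := GRing.isMonoidMorphism.Build R S cnj cnj_mon.
End Cnj.

Definition map_hd (R S : pzRingType) n (f : R -> S) (g : hdata R n) : hdata S n :=
  @HData S n (f (hv g)) (f (hvi g)) (fun i => f (hT g i)) (f (hrho g)) (f (hrhoi g)).

Lemma map_rel (R S : pzRingType) n (f : {rmorphism R -> S}) (g : hdata R n) :
  hecke_rel g -> (forall x, f (hv g) * x = x * f (hv g)) -> (forall x, f (hvi g) * x = x * f (hvi g)) ->
  hecke_rel (map_hd f g).
Proof.
move=> [vvi [viv [_ [_ [q [b [c [r [rri rir]]]]]]]]] vc vic; rewrite /map_hd /=.
do ![split] => //.
- by rewrite -rmorphM vvi rmorph1.
- by rewrite -rmorphM viv rmorph1.
- by move=> i; rewrite -!rmorphB -!rmorphD -rmorphM q rmorph0.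
- by move=> i; rewrite -!rmorphM b.
- by move=> i j h1 h2; rewrite -!rmorphM c.
- by move=> i; rewrite -!rmorphM r.
- by rewrite -rmorphM rri rmorph1.
- by rewrite -rmorphM rir rmorph1.
Qed.

Lemma scal_c_gen (H : pzRingType) m (a : H) (X : 'M[H]_m) : (forall y, a * y = y * a) -> a%:M * X = X * a%:M.
Proof.
move=> ac; rewrite -!mulmxE; apply/matrixP => i j.
rewrite mul_scalar_mx !mxE (bigD1 j) //= big1 ?addr0.
  by rewrite !mxE eqxx mulr1n ac.
by move=> k /negbTE hk; rewrite !mxE hk mulr0n mulr0.
Qed.

Section Inter.
Variables (H : pzRingType) (n : nat) (g : hdata H n) (ish : is_hecke g) (m : nat)
  (A : {rmorphism H -> 'M[H]_m}) (E : 'M[H]_m).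
Hypotheses (Av : A (hv g) = (hv g)%:M) (Avi : A (hvi g) = (hvi g)%:M).
Local Notation P x := (A x *m E = E *m (x%:M)).

Let Sc := (@scalar_mx H m : {rmorphism H -> 'M[H]_m}).
Let Uu : 'M[H]_(m + m) := block_mx 1%:M E 0 1%:M.
Let Ww : 'M[H]_(m + m) := block_mx 1%:M (- E) 0 1%:M.

Let UW : Uu * Ww = 1.
Proof.
rewrite -mulmxE mulmx_block !mulmx0 !mul0mx !mul1mx !mulmx1 !addr0 add0r addNr.
by rewrite -scalar_mx_block.
Qed.
Let WU : Ww * Uu = 1.
Proof.
rewrite -mulmxE mulmx_block !mulmx0 !mul0mx !mul1mx !mulmx1 !addr0 add0r subrr.
by rewrite -scalar_mx_block.
Qed.

Let conjE (X D : 'M[H]_m) : Uu * block_mx X 0 0 D * Ww = block_mx X (E *m D - X *m E) 0 D.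
Proof.
rewrite -!mulmxE !mulmx_block !mulmx0 !mul0mx !mul1mx !mulmx1 !addr0 !add0r.
by rewrite mul0mx add0r mulmxN addrC.
Qed.

Lemma interP : P (hv g) -> P (hvi g) -> (forall i, P (hT g i)) -> P (hrho g) -> P (hrhoi g) ->
  forall x, P x.
Proof.
move=> p1 p2 p3 p4 p5.
pose F1 := blk A Sc.
pose F2 := @cnj _ _ F1 Uu Ww UW WU.
have key : forall x, F2 x = F1 x <-> P x.
  move=> x; rewrite /F2 /cnj /F1 /blk /= conjE; split.
    move/eq_block_mx => [_ e _ _]; apply/eqP; rewrite eq_sym -subr_eq0; apply/eqP.
    by rewrite e.
  by move=> ->; rewrite subrr.
have rel : hecke_rel (map_hd F1 g).
  have hg := ish.1.
  have [_ [_ [vc [vic _]]]] := hg.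
  apply: map_rel => //.
    have e : blk A Sc (hv g) = (hv g)%:M by rewrite /blk Av -scalar_mx_block.
    move=> X; change (blk A Sc (hv g) * X = X * blk A Sc (hv g)); rewrite e; exact: (scal_c_gen X vc).
  have e : blk A Sc (hvi g) = (hvi g)%:M by rewrite /blk Avi -scalar_mx_block.
  move=> X; change (blk A Sc (hvi g) * X = X * blk A Sc (hvi g)); rewrite e; exact: (scal_c_gen X vic).
have [_ uniq] := ish.2 _ _ rel.
have gm1 : hecke_gen_map g (map_hd F1 g) F1 by [].
have gm2 : hecke_gen_map g (map_hd F1 g) F2.
  rewrite /hecke_gen_map /map_hd /=; split; [|split; [|split; [|split]]];
    try (by apply/key); by move=> i; apply/key.
move=> x; apply/key; symmetry; exact: (uniq _ _ gm1 gm2 x).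
Qed.
End Inter.


Lemma colP (H : pzRingType) n (M : 'M[H]_(n.+2)) (x : H) im : (im < n.+2)%N ->
  (forall h, M *m vec n.+2 im h = vec n.+2 im (x * h)) ->
  M *m delta_mx (@inord n.+1 im) (@inord n.+1 im) = delta_mx (@inord n.+1 im) (@inord n.+1 im) *m x%:M.
Proof.
move=> him e; apply/matrixP => a b.
have ea := congr1 (fun X : 'cV[H]_(n.+2) => X a 0) (e 1).
rewrite /= mul_vec_nat // vecE mulr1 in ea.
rewrite !mxE (bigD1 (inord im)) //= big1; last first.
  by move=> k /negbTE hk; rewrite !mxE hk /= mulr0.
rewrite (bigD1 (inord im)) //= big1; last first.
  by move=> k /negbTE hk; rewrite !mxE hk andbF mul0r.
rewrite !mxE !eqxx /= !addr0 ea.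
have ai : (a == inord im :> 'I_n.+2) = ((a : nat) == im).
  by apply/eqP/eqP => [->|h]; [rewrite inordK | apply/val_inj; rewrite /= inordK].
rewrite ai eq_sym.
rewrite andbT [inord im == b]eq_sym; case: (b == inord im); case: (im == a); by rewrite /= ?mulr1 ?mul1r ?mulr0 ?mul0r ?mulr1n ?mulr0n.
Qed.

Ltac stp g := repeat match goal with
  | |- context [?A *m (?B + ?C)] => rewrite (mulmxDr A B C)
  | |- context [?A *m (?B - ?C)] => rewrite (mulmxBr A B C)
  | |- context [?A *m (- ?B)] => rewrite (mulmxN A B)
  | |- context [(?B - ?C) *m ?A] => rewrite (mulmxBl B C A)
  | |- context [?a%:M *m vec _ ?y ?h] => rewrite (scal_vec _ a y h)
  | |- context [Rm g *m vec _ ?y ?h] => first [rewrite (@Rm_last _ _ g y h); [|lia] | rewrite (@Rm_lt _ _ g y h); [|lia]]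
  | |- context [Rim g *m vec _ ?y ?h] => first [rewrite (@Rim_0 _ _ g y h); [|lia] | rewrite (@Rim_pos _ _ g y h); [|lia]]
  | |- context [T0m g *m vec _ ?y ?h] => first [rewrite (@T0_last _ _ g y h); [|lia] | rewrite (@T0_0 _ _ g y h); [|lia] | rewrite (@T0_mid _ _ g y h); [|lia]]
  | |- context [Tm g ?k *m vec _ ?y ?h] => first [rewrite (@Tm_a _ _ g k y h); [|lia|lia] | rewrite (@Tm_b _ _ g k y h); [|lia|lia] | rewrite (@Tm_lt _ _ g k y h); [|lia|lia] | rewrite (@Tm_gt _ _ g k y h); [|lia]]
  end.

Unset Implicit Arguments. Set Strict Implicit.
Theorem mainTheorem8 (n : nat) (hr : (2 < n.+1)%N) (im : nat) (him : (1 <= im <= n)%N)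
  (H : pzRingType) (g : hdata H n) (H' : pzRingType) (g' : hdata H' n.+1) :
  is_hecke g -> is_hecke g' ->
  exists f : {rmorphism H -> H'},
    injective f /\
    f (hv g) = hv g' /\ f (hvi g) = hvi g' /\
    (forall i : nat, (1 <= i < im)%N -> f (hT g (om n i)) = hT g' (om n.+1 i)) /\
    (forall t : H', hT g' (om n.+1 im) * t = 1 -> t * hT g' (om n.+1 im) = 1 ->
       f (hT g (om n im)) = hT g' (om n.+1 im) * hT g' (om n.+1 im.+1) * t) /\
    (forall i : nat, (im.+1 <= i <= n.+1)%N -> f (hT g (om n i)) = hT g' (om n.+1 i.+1)) /\
    (forall t : H', hT g' (om n.+1 im.+1) * t = 1 -> t * hT g' (om n.+1 im.+1) = 1 ->
       f (hrho g) = t * hrho g') /\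
    f (hrhoi g) = hrhoi g' * hT g' (om n.+1 im.+1).
Proof.
move=> ish ish'.
have hg := ish.1; have hg' := ish'.1.
have n2 : (2 <= n)%N by lia.
have rF := gF_rel hg' n2 him.
have [[f [fv [fvi [fT [fr fri]]]]] _] := ish.2 _ _ rF.
have rM := gM_rel hg n2.
have [[psi [pv [pvi [pT [pr pri]]]]] _] := ish'.2 _ _ rM.
rewrite /= in fv fvi fT fr fri pv pvi pT pr pri.
have invU : forall j t, Th g' j * t = 1 -> t * Th g' j = 1 -> t = Ui g' j.
  move=> j t h1 h2.
  by rewrite -[t]mulr1 -(UUi hg' j) mulrA h2 mul1r.
exists f; split; last split; [|exact: fv|split; [exact: fvi|split; [|split; [|split; [|split]]]]].
- have psiU : forall j, psi (Th g' j) = Gen g (om n.+1 j) by move=> j; exact: pT.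
  have psiUi : forall j, psi (Ui g' j) = Gen g (om n.+1 j) - (dd g)%:M.
    by move=> j; rewrite /Ui /dd !rmorphB psiU pv pvi.
  have GenT : forall j, (0 < j < n.+2)%N -> Gen g (om n.+1 j) = Tm g j.
    move=> j hj; rewrite /Gen /= modn_small; last lia.
    by have -> : (j == 0)%N = false by lia.
  have Gen0 : Gen g (om n.+1 0) = T0m g by [].
  have key : forall z, (psi \o f) z *m delta_mx (@inord n.+1 im) (@inord n.+1 im)
                       = delta_mx (@inord n.+1 im) (@inord n.+1 im) *m z%:M.
    apply: (interP ish) => /=.
    + by rewrite fv pv.
    + by rewrite fvi pvi.
    + apply: colP; first lia. by move=> h; rewrite fv pv; stp g.
    + apply: colP; first lia. by move=> h; rewrite fvi pvi; stp g.
    + move=> i; apply: colP; first lia. move=> h; rewrite fT /Aim.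
      have hi := ltn_ord i.
      have fin : forall k, (k : nat) = i -> vec n.+2 im (Th g k * h) = vec n.+2 im (hT g i * h).
        move=> k hk; rewrite /Th; congr (vec _ _ (hT g _ * h)); apply/val_inj => /=.
        rewrite modn_small; lia.
      have [i0|i0] := eqVneq (i : nat) 0%N.
        rewrite psiU Gen0; stp g; exact: fin.
      rewrite /=.
      case: ifP => h1.
        rewrite psiU GenT; last lia.
        stp g; exact: fin.
      case: ifP => h2.
        rewrite /Xim !rmorphM psiU psiU psiUi !GenT; try lia.
        rewrite -!mulmxE -!mulmxA; stp g.
        rewrite /= addrK; apply: fin; lia.
      rewrite psiU GenT; last lia.
      stp g; apply: fin; lia.
    + apply: colP; first lia. move=> h; rewrite fr /Pim rmorphM psiUi pr GenT; last lia.
      rewrite -mulmxE -mulmxA; stp g.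
      by rewrite /= addrK.
    + apply: colP; first lia. move=> h; rewrite fri /Qim rmorphM psiU pri GenT; last lia.
      rewrite -mulmxE -mulmxA; stp g.
      by [].
  move=> x y exy.
  have ez : f (x - y) = 0 by rewrite rmorphB exy subrr.
  have k := key (x - y); rewrite /= ez rmorph0 mul0mx in k.
  have := congr1 (fun M : 'M[H]_(n.+2) => M (@inord n.+1 im) (@inord n.+1 im)) k.
  rewrite /= mxE mxE (bigD1 (@inord n.+1 im)) //= big1; last first.
    by move=> j /negbTE hj; rewrite !mxE hj andbF mul0r.
  rewrite !mxE !eqxx /= mul1r mulr1n addr0 => e.
  by apply/eqP; rewrite -subr_eq0 -e.
- move=> i hi; rewrite fT /Aim /= modn_small; last lia.
  have -> : (i == 0)%N = false by lia.
  by rewrite (_ : (i < im)%N = true); last lia.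
- move=> t h1 h2; rewrite fT /Aim /= modn_small; last lia.
  have -> : (im == 0)%N = false by lia.
  rewrite ltnn eqxx /Xim.
  by rewrite (invU im t h1 h2).
- move=> i hi; rewrite fT /Aim /=.
  have [ilt|ieq] : (i < n.+1)%N \/ i = n.+1 by lia.
    rewrite modn_small //.
    have -> : (i == 0)%N = false by lia.
    have -> : (i < im)%N = false by lia.
    by have -> : (i == im)%N = false by lia.
  rewrite ieq modnn /=.
  exact: (esym (UN2 g')).
- move=> t h1 h2; rewrite fr /Pim.
  by rewrite (invU im.+1 t h1 h2).
- by rewrite fri.
Qed.
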